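(* Let $r\geq 1$ be an integer and $\varepsilon,\delta\in(0,1)$. Let $\mathcal{H}$ be an $r$-partite $r$-uniform hypergraph with $n$ vertices and $r$-partition $V(\mathcal{H})=V_1\cup\dots\cup V_r$, and suppose $\mathcal{H}$ is not $(\varepsilon,\delta)$-superspread. Then there exists an index $i\in[r]$ such that $e(\mathcal{H}_{[r]\setminus\{i\}})\geq \frac{\varepsilon\delta}{r2^r}e(\mathcal{H})$.
   Context: An $r$-partite $r$-uniform hypergraph with $r$-partition $V_1\cup\dots\cup V_r$ is one in which every edge contains exactly one vertex from each $V_i$. For $I\subseteq[r]$, the restriction $\mathcal{H}_I$ is the hypergraph with vertex set $V_I=\bigcup_{i\in I}V_i$ and edge set $\{e\cap V_I: e\in E(\mathcal{H})\}$ (a set, so repeated intersections are counted once). For $S\subseteq V(\mathcal{H})$, $\deg_{\mathcal{H}}(S)=|\{e\in E(\mathcal{H}): S\subseteq e\}|$. An edge $e$ is $\delta$-heavy if there exist $S\subseteq e$ and $v\in e\setminus S$ with $\deg_{\mathcal{H}}(S\cup\{v\})\geq\delta\deg_{\mathcal{H}}(S)$. $\mathcal{H}$ is $(\varepsilon,\delta)$-superspread if at most $\varepsilon\,e(\mathcal{H})$ of its edges are $\delta$-heavy. *)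

(* Defs.v *)
From mathcomp Require Import all_boot all_order all_algebra.
Set Implicit Arguments. Unset Strict Implicit. Unset Printing Implicit Defensive.
Import Order.TTheory GRing.Theory Num.Theory.
Local Open Scope ring_scope.

(* An r-partite r-uniform hypergraph on a finite vertex type V:
   [part : V -> 'I_r] gives the r-partition V = V_0 u ... u V_{r-1}
   (V_i = [set v | part v == i]); [E : {set {set V}}] is the edge set. *)

Definition rpartite_uniform (V : finType) (r : nat) (part : V -> 'I_r)
  (E : {set {set V}}) : Prop :=
  forall e, e \in E -> forall i : 'I_r, #|[set v in e | part v == i]| = 1.

Definition partset (V : finType) (r : nat) (part : V -> 'I_r) (I : {set 'I_r})
  : {set V} := [set v | part v \in I].

Definition restrict_edges (V : finType) (r : nat) (part : V -> 'I_r)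
  (E : {set {set V}}) (I : {set 'I_r}) : {set {set V}} :=
  [set e :&: partset part I | e in E].

Definition deg (V : finType) (E : {set {set V}}) (S : {set V}) : nat :=
  #|[set e in E | S \subset e]|.

Definition heavy (R : realFieldType) (V : finType) (E : {set {set V}})
  (delta : R) (e : {set V}) : bool :=
  [exists S : {set V}, [exists v : V,
    [&& S \subset e, v \in e :\: S &
        delta * (deg E S)%:R <= (deg E (v |: S))%:R]]].

Definition superspread (R : realFieldType) (V : finType) (E : {set {set V}})
  (eps delta : R) : Prop :=
  (#|[set e in E | heavy E delta e]|%:R <= eps * #|E|%:R).

(* Main.v *)
Require Import Defs.
From mathcomp Require Import all_boot all_order all_algebra.
From mathcomp Require Import ring lra.
Import Order.TTheory GRing.Theory Num.Theory.
Local Open Scope ring_scope.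

Lemma card_part_aux (T U : finType) (X : {set T}) (g : T -> U) :
  #|X| = (\sum_(u : U) #|[set x in X | g x == u]|)%N.
Proof.
rewrite -sum1_card (partition_big g predT) //=.
apply: eq_bigr => u _; rewrite -sum1_card; apply: eq_bigl => x; by rewrite inE.
Qed.

Lemma pigeon_aux (T : finType) (t0 : T) (f : T -> nat) :
  exists t, (\sum_(i : T) f i <= #|T| * f t)%N.
Proof.
exists [arg max_(t > t0) f t]; case: arg_maxnP => // t _ Hmax.
rewrite -sum_nat_const; apply: leq_sum => i _; exact: Hmax.
Qed.

Lemma card_setT_aux (T : finType) : #|{set T}| = (2 ^ #|T|)%N.
Proof. have := card_powerset [set: T]. by rewrite powersetT !cardsT. Qed.

Theorem lemma2p6 (R : realFieldType) (r n : nat) (eps delta : R)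
  (V : finType) (part : V -> 'I_r) (E : {set {set V}}) :
  (1 <= r)%N -> 0 < eps < 1 -> 0 < delta < 1 ->
  #|V| = n ->
  rpartite_uniform part E ->
  ~ superspread E eps delta ->
  exists i : 'I_r,
    eps * delta / (r%:R * 2 ^+ r) * #|E|%:R
      <= #|restrict_edges part E (~: [set i])|%:R.
Proof.
move=> r1 /andP[e0 e1] /andP[d0 d1] _ Hunif Hns.
have Huniq : forall f, f \in E -> forall x y, x \in f -> y \in f ->
    part x = part y -> x = y.
  move=> f fE x y xf yf pxy.
  have /eqP/cards1P[z Hz] := Hunif f fE (part x).
  have : x \in [set v in f | part v == part x] by rewrite inE xf eqxx.
  have : y \in [set v in f | part v == part x] by rewrite inE yf pxy eqxx.
  by rewrite Hz !inE => /eqP-> /eqP->.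
set Hv := [set e in E | heavy E delta e].
have Hlt : eps * #|E|%:R < #|Hv|%:R by rewrite ltNge; apply/negP.
pose wit (e : {set V}) := [pick p : {set V} * V | [&& p.1 \subset e, p.2 \in e :\: p.1 &
   delta * (deg E p.1)%:R <= (deg E (p.2 |: p.1))%:R]].
have witP : forall e : {set V}, e \in Hv -> exists S v, wit e = Some (S, v) /\
   [&& S \subset e, v \in e :\: S & delta * (deg E S)%:R <= (deg E (v |: S))%:R].
  move=> e; rewrite inE => /andP[_ /existsP[S /existsP[v H]]].
  rewrite /wit; case: pickP => [[S' v'] H'|/(_ (S, v))]; first by exists S', v'.
  by rewrite /= H.
pose j0 : 'I_r := Ordinal r1.
pose ty (e : {set V}) : {set 'I_r} * 'I_r :=
  if wit e is Some p then (part @: p.1, part p.2) else (set0, j0).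
pose Sof (e : {set V}) := if wit e is Some p then p.1 else set0.
have [[I j] Hpig] := (@pigeon_aux _ ((set0, j0) : {set 'I_r} * 'I_r)) (fun t => #|[set e in Hv | ty e == t]|).
rewrite -card_part_aux card_prod card_setT_aux card_ord /= in Hpig.
set Ht := [set e in Hv | ty e == (I, j)] in Hpig.
exists j.
set P := restrict_edges part E (~: [set j]).
have key : delta * #|Ht|%:R <= #|P|%:R.
  rewrite (@card_part_aux _ _ Ht Sof) (@card_part_aux _ _ P (fun p => p :&: partset part I)).
  rewrite !natr_sum mulr_sumr; apply: ler_sum => S _.
  set A := [set e in Ht | _]; set B := [set p in P | _].
  have [->|[e He]] := set_0Vmem A; first by rewrite cards0 mulr0 ler0n.
  have HeHv : e \in Hv by move: He; rewrite !inE => /andP[/andP[-> _] _].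
  have HeE : e \in E by move: HeHv; rewrite inE => /andP[].
  have [S0 [v [Hw /and3P[HS0 Hv0 Hdeg]]]] := witP e HeHv.
  move: He; rewrite !inE /ty /Sof Hw /= => /andP[/andP[_ /eqP[HI Hj]] /eqP HS].
  subst S0 I.
  have HA : (#|A| <= deg E S)%N.
    apply: subset_leq_card; apply/subsetP => f; rewrite !inE.
    move=> /andP[/andP[fHv _] /eqP HSf].
    have fHv' : f \in Hv by rewrite inE.
    have [S1 [v1 [Hw1 /and3P[HS1 _ _]]]] := witP f fHv'.
    move: fHv => /andP[-> _] /=.
    by move: HSf; rewrite /Sof Hw1 /= => <-.
  pose D := [set f in E | v |: S \subset f].
  pose W := partset part (~: [set j]).
  have HB : (deg E (v |: S) <= #|B|)%N.
    rewrite /deg -/D -(@card_in_imset _ _ (fun f => f :&: W)).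
      apply: subset_leq_card; apply/subsetP => p /imsetP[f fD ->].
      move: fD; rewrite inE => /andP[fE /subsetP vSf].
      have vf : v \in f by apply: vSf; rewrite !inE eqxx.
      have Sf : {subset S <= f} by move=> s sS; apply: vSf; rewrite !inE sS orbT.
      rewrite inE; apply/andP; split; first by apply/imsetP; exists f.
      apply/eqP/setP => x; rewrite !inE.
      apply/idP/idP.
        move=> /andP[/andP[xf _] /imsetP[s sS psx]].
        by rewrite (Huniq f fE x s xf (Sf s sS) psx).
      move=> xS; rewrite (Sf x xS) andTb; apply/andP; split; last first.
        by apply/imsetP; exists x.
      apply/negP => /eqP pxj.
      move: Hv0; rewrite !inE => /andP[vnS ve].
      have xe : x \in e by apply: (subsetP HS0).
      have := Huniq e HeE x v xe ve; rewrite pxj => /(_ (esym Hj)) xv.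
      by move: vnS; rewrite -xv xS.
    move=> f1 f2; rewrite !inE => /andP[f1E /subsetP H1] /andP[f2E /subsetP H2] Heq.
    have vf1 : v \in f1 by apply: H1; rewrite !inE eqxx.
    have vf2 : v \in f2 by apply: H2; rewrite !inE eqxx.
    have sub : forall g1 g2, g1 \in E -> g2 \in E -> v \in g1 -> v \in g2 ->
        g1 :&: W = g2 :&: W -> g1 \subset g2.
      move=> g1 g2 g1E g2E vg1 vg2 Hg; apply/subsetP => x xg1.
      case: (eqVneq (part x) j) => pxj.
        by rewrite (Huniq g1 g1E x v xg1 vg1 (etrans pxj (esym Hj))).
      have : x \in g1 :&: W by rewrite !inE xg1 pxj.
      by rewrite Hg inE => /andP[].
    by apply/eqP; rewrite eqEsubset !sub.
  apply: (le_trans (y := delta * (deg E S)%:R)).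
    by rewrite ler_wpM2l ?(ltW d0) // ler_nat.
  by apply: (le_trans Hdeg); rewrite ler_nat.
apply: le_trans key.
have HN : 0 < (r%:R * 2 ^+ r : R) by rewrite mulr_gt0 ?exprn_gt0 // ltr0n.
have -> : eps * delta / (r%:R * 2 ^+ r) * #|E|%:R =
          (delta * (eps * #|E|%:R)) / (r%:R * 2 ^+ r) by ring.
rewrite ler_pdivrMr //.
have Hp : (#|Hv|%:R : R) <= (r%:R * 2 ^+ r) * #|Ht|%:R.
  by rewrite -natrX -!natrM ler_nat; apply: (leq_trans Hpig); rewrite (mulnC r).
move: HN Hp Hlt; set N := (r%:R * 2 ^+ r : R); set a := (#|Hv|%:R : R);
  set b := (#|Ht|%:R : R); set c := (eps * #|E|%:R).
move=> HN Hp Hlt. nra.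
Qed.
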